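(* Let $\mathcal R_Q$ be a nonempty set of rows that has the consecutive-ones property and whose overlap graph is connected, let $(c_1,\ldots,c_m)$ be a consecutive-ones ordering of $\mathcal R_Q$, and let $Z$ be a row not in $\mathcal R_Q$. Then $\mathcal R_Q\cup\{Z\}$ fails to have the consecutive-ones property if and only if one of the following holds: (1) there is a 1-0-1 configuration for $Z$; (2) there is a 0-1-0 configuration for $Z$ and $Z$ contains a column of the unconstrained Venn class of $\mathcal R_Q$.
   Context: Each row is identified with the set of columns in which it has a 1. A consecutive-ones ordering of a set of rows is an ordering of all columns in which each of these rows occupies consecutive columns; the set has the consecutive-ones property if one exists. Two rows overlap if they intersect and neither is a subset of the other; the overlap graph of a set of rows joins overlapping rows. Venn classes of $\mathcal R_Q$: two columns are in the same Venn class if they belong to exactly the same members of $\mathcal R_Q$; the unconstrained Venn class consists of the columns in no member of $\mathcal R_Q$, and all other Venn classes are constrained. A 1-0-1 configuration for $Z$ is a triple of columns $(c_h,c_i,c_j)$ with $h<i<j$ lying in three distinct constrained Venn classes of $\mathcal R_Q$ such that $c_h\in Z$, $c_i\notin Z$, $c_j\in Z$. A 0-1-0 configuration is defined identically except $c_h\notin Z$, $c_i\in Z$, $c_j\notin Z$. *)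

(* Defs.v *)
(* Columns form a finite type C; a row is a set of columns. *)
From mathcomp Require Import all_boot.
Set Implicit Arguments. Unset Strict Implicit. Unset Printing Implicit Defensive.

Section C1P.
Variable C : finType.

Definition column_ordering (s : seq C) : Prop := uniq s /\ forall c : C, c \in s.

Definition consecutive_in (s : seq C) (X : {set C}) : Prop :=
  forall x0 : C, forall h i j : nat, h < i -> i < j -> j < size s ->
    nth x0 s h \in X -> nth x0 s j \in X -> nth x0 s i \in X.

Definition c1p_ordering (R : {set {set C}}) (s : seq C) : Prop :=
  column_ordering s /\ forall X, X \in R -> consecutive_in s X.

Definition has_C1P (R : {set {set C}}) : Prop := exists s, c1p_ordering R s.

Definition overlap (A B : {set C}) : bool :=
  [&& A :&: B != set0, ~~ (A \subset B) & ~~ (B \subset A)].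

Definition overlap_rel (R : {set {set C}}) : rel {set C} :=
  fun A B => [&& A \in R, B \in R & overlap A B].

Definition overlap_connected (R : {set {set C}}) : Prop :=
  forall A B, A \in R -> B \in R -> connect (overlap_rel R) A B.

Definition same_venn (R : {set {set C}}) (c d : C) : Prop :=
  forall X, X \in R -> (c \in X) = (d \in X).

Definition unconstrained (R : {set {set C}}) (c : C) : Prop :=
  forall X, X \in R -> c \notin X.

Definition constrained (R : {set {set C}}) (c : C) : Prop :=
  exists2 X, X \in R & c \in X.

Definition venn_triple (R : {set {set C}}) (s : seq C) (x0 : C) (h i j : nat) : Prop :=
  [/\ h < i, i < j, j < size s,
      [/\ constrained R (nth x0 s h), constrained R (nth x0 s i)
        & constrained R (nth x0 s j)]
    & [/\ ~ same_venn R (nth x0 s h) (nth x0 s i),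
          ~ same_venn R (nth x0 s i) (nth x0 s j)
        & ~ same_venn R (nth x0 s h) (nth x0 s j)]].

Definition config101 (R : {set {set C}}) (s : seq C) (Z : {set C}) : Prop :=
  exists x0 h i j, venn_triple R s x0 h i j /\
    [/\ nth x0 s h \in Z, nth x0 s i \notin Z & nth x0 s j \in Z].

Definition config010 (R : {set {set C}}) (s : seq C) (Z : {set C}) : Prop :=
  exists x0 h i j, venn_triple R s x0 h i j /\
    [/\ nth x0 s h \notin Z, nth x0 s i \in Z & nth x0 s j \notin Z].

End C1P.

(* Main.v *)
Require Import Defs.
From mathcomp Require Import all_boot zify.
From Stdlib Require Import Classical.
Set Implicit Arguments. Unset Strict Implicit. Unset Printing Implicit Defensive.

Definition cb (C : finType) (R : {set {set C}}) (c : C) : bool := [exists X in R, c \in X].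
Definition sv (C : finType) (R : {set {set C}}) (c d : C) : bool :=
  [forall X in R, (c \in X) == (d \in X)].
Definition btw (p q r : nat) : Prop := (p < q /\ q < r) \/ (r < q /\ q < p).

Lemma cbP (C : finType) (R : {set {set C}}) c : reflect (constrained R c) (cb R c).
Proof.
apply: (iffP existsP) => [[X /andP[H1 H2]]|[X H1 H2]]; first by exists X.
by exists X; rewrite H1 H2.
Qed.

Lemma svP (C : finType) (R : {set {set C}}) c d : reflect (same_venn R c d) (sv R c d).
Proof.
apply: (iffP forallP) => [H X HX|H X]; first by have := H X; rewrite HX => /eqP.
by apply/implyP => HX; rewrite (H X HX).
Qed.

Lemma uncP (C : finType) (R : {set {set C}}) c : unconstrained R c <-> ~~ cb R c.
Proof.
split => [H|H X HX].
  by apply/negP => /cbP [X HX Hc]; move: (H X HX); rewrite Hc.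
by apply/negP => Hc; move/negP: H; apply; apply/cbP; exists X.
Qed.

Lemma sv_refl (C : finType) (R : {set {set C}}) c : sv R c c.
Proof. by apply/svP. Qed.
Lemma sv_sym (C : finType) (R : {set {set C}}) c d : sv R c d = sv R d c.
Proof. by apply/svP/svP => H X HX; rewrite H. Qed.
Lemma sv_trans (C : finType) (R : {set {set C}}) c d e : sv R c d -> sv R d e -> sv R c e.
Proof. by move=> /svP H1 /svP H2; apply/svP => X HX; rewrite H1 ?H2. Qed.
Lemma sv_mem (C : finType) (R : {set {set C}}) c d X : sv R c d -> X \in R -> (c \in X) = (d \in X).
Proof. by move=> /svP H HX; apply: H. Qed.

Lemma nsvP (C : finType) (R : {set {set C}}) c d :
  ~~ sv R c d -> exists2 X, X \in R & (c \in X) != (d \in X).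
Proof.
move=> H; apply: NNPP => Hn; move/negP: H; apply; apply/svP => X HX.
case: (boolP ((c \in X) == (d \in X))) => [/eqP //|Hne]; exfalso; apply: Hn; by exists X.
Qed.

Lemma idx_inj (C : finType) (s : seq C) a b :
  column_ordering s -> index a s = index b s -> a = b.
Proof.
move=> [Hu Hm] E; by rewrite -(nth_index a (Hm a)) E nth_index.
Qed.

Lemma idx_neq (C : finType) (s : seq C) a b :
  column_ordering s -> a != b -> index a s != index b s.
Proof. by move=> Hs /eqP Hab; apply/eqP => E; apply: Hab; apply: idx_inj E. Qed.

Lemma cons_idx (C : finType) (s : seq C) X a b c :
  column_ordering s -> consecutive_in s X -> a \in X -> b \in X ->
  btw (index a s) (index c s) (index b s) -> c \in X.
Proof.
move=> [Hu Hm] HX Ha Hb [[H1 H2]|[H1 H2]].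
- have := HX a (index a s) (index c s) (index b s) H1 H2.
  rewrite index_mem Hm !nth_index //; by apply.
- have := HX a (index b s) (index c s) (index a s) H1 H2.
  rewrite index_mem Hm !nth_index //; by apply.
Qed.

Definition agree (C : finType) (s t : seq C) (a b : C) : bool :=
  (index a s < index b s) == (index a t < index b t).

Lemma btw_sym p q r : btw p q r -> btw r q p.
Proof. rewrite /btw; lia. Qed.

Lemma A1 p p' q r r' : btw p q r -> btw p' q r -> btw p' q r' -> (p < r) = (p' < r').
Proof. rewrite /btw => T1 T2 T3; apply/idP/idP; lia. Qed.
Lemma A2 p p' q r : btw p q r -> btw p' q r -> (p < r) = (p' < r).
Proof. rewrite /btw => T1 T2; apply/idP/idP; lia. Qed.
Lemma A3 a c p q : btw a p q -> btw c q p -> (a < q) = ~~ (c < p).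
Proof. rewrite /btw => T1 T2; apply/idP/idP; lia. Qed.

Lemma ov_wit (C : finType) (A B : {set C}) : overlap A B ->
  [/\ exists m, m \in A /\ m \in B, exists a, a \in A /\ a \notin B
    & exists b, b \in B /\ b \notin A].
Proof.
case/and3P => /set0Pn [m] Hm /subsetPn [a Ha Hna] /subsetPn [b Hb Hnb].
split; [exists m | exists a | exists b]; by move: Hm; rewrite ?inE => /andP.
Qed.

Lemma overlapC (C : finType) (A B : {set C}) : overlap A B = overlap B A.
Proof. by rewrite /overlap setIC; congr (_ && _); apply: andbC. Qed.

Lemma ov_relC (C : finType) (R : {set {set C}}) A B : overlap_rel R A B = overlap_rel R B A.
Proof. by rewrite /overlap_rel overlapC andbCA. Qed.

Lemma triple (C : finType) (s : seq C) (A B : {set C}) a m b :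
  column_ordering s -> consecutive_in s A -> consecutive_in s B ->
  a \in A -> a \notin B -> m \in A -> m \in B -> b \in B -> b \notin A ->
  btw (index a s) (index m s) (index b s).
Proof.
move=> Hs HA HB Ha Hna Hma Hmb Hb Hnb.
have nam : index a s != index m s by apply: idx_neq => //; apply/eqP => E; move: Hna; rewrite E Hmb.
have nab : index a s != index b s by apply: idx_neq => //; apply/eqP => E; move: Hna; rewrite E Hb.
have nmb : index m s != index b s by apply: idx_neq => //; apply/eqP => E; move: Hnb; rewrite -E Hma.
have H1 : ~ btw (index m s) (index a s) (index b s).
  by move=> H; move/negP: Hna; apply; apply: (cons_idx Hs HB Hmb Hb H).
have H2 : ~ btw (index a s) (index b s) (index m s).
  by move=> H; move/negP: Hnb; apply; apply: (cons_idx Hs HA Ha Hma H).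
move: H1 H2; rewrite /btw; lia.
Qed.

Lemma ltn_anti (C : finType) (s : seq C) a b : column_ordering s -> a != b ->
  (index a s < index b s) = ~~ (index b s < index a s).
Proof. move=> Hs Hab; have := idx_neq Hs Hab; lia. Qed.

Lemma agreeC (C : finType) (s t : seq C) a b : column_ordering s -> column_ordering t -> a != b ->
  agree s t a b = agree s t b a.
Proof.
move=> Hs Ht Hab; rewrite /agree (ltn_anti Hs Hab) (ltn_anti Ht Hab).
by case: (_ < _); case: (_ < _).
Qed.

Lemma edge_const (C : finType) (s t : seq C) (A B : {set C}) a b a' b' :
  column_ordering s -> column_ordering t ->
  consecutive_in s A -> consecutive_in s B -> consecutive_in t A -> consecutive_in t B ->
  overlap A B ->
  a \in A -> a \notin B -> b \in B -> b \notin A ->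
  a' \in A -> a' \notin B -> b' \in B -> b' \notin A ->
  agree s t a b = agree s t a' b'.
Proof.
move=> Hs Ht HsA HsB HtA HtB Hov Ha Hna Hb Hnb Ha' Hna' Hb' Hnb'.
case: (ov_wit Hov) => [[m [Hma Hmb]] _ _].
have arith : forall (u : seq C), column_ordering u -> consecutive_in u A -> consecutive_in u B ->
   (index a u < index b u) = (index a' u < index b' u).
  move=> u Hu HA HB.
  have T1 := triple Hu HA HB Ha Hna Hma Hmb Hb Hnb.
  have T2 := triple Hu HA HB Ha' Hna' Hma Hmb Hb Hnb.
  have T3 := triple Hu HA HB Ha' Hna' Hma Hmb Hb' Hnb'.
  exact: A1 T1 T2 T3.
by rewrite /agree (arith s) // (arith t).
Qed.

Lemma c1p_cons (C : finType) (R : {set {set C}}) s X : c1p_ordering R s -> X \in R -> consecutive_in s X.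
Proof. by case=> _ H; apply: H. Qed.

Lemma adj_case2 (C : finType) (R : {set {set C}}) (s t : seq C) (A B D : {set C}) a b c d :
  c1p_ordering R s -> c1p_ordering R t -> A \in R -> B \in R -> D \in R ->
  overlap A B -> overlap D B ->
  (forall p, p \in A -> p \in B -> p \in D) ->
  a \in A -> a \notin B -> b \in B -> b \notin A ->
  c \in D -> c \notin B -> d \in B -> d \notin D ->
  agree s t a b = agree s t c d.
Proof.
move=> Hs Ht HA HB HD HAB HDB Hsub Ha Hna Hb Hnb Hc Hnc Hd Hnd.
have Hs' := Hs.1; have Ht' := Ht.1.
case: (ov_wit HAB) => [[m [Hma Hmb]] _ _].
have Hmd := Hsub m Hma Hmb.
have Hnda : d \notin A by apply/negP => Hda; move/negP: Hnd; apply; apply: Hsub.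
have arith : forall (u : seq C), c1p_ordering R u ->
   (index a u < index d u) = (index c u < index d u).
  move=> u Hu.
  have T1 := triple Hu.1 (c1p_cons Hu HA) (c1p_cons Hu HB) Ha Hna Hma Hmb Hd Hnda.
  have T2 := triple Hu.1 (c1p_cons Hu HD) (c1p_cons Hu HB) Hc Hnc Hmd Hmb Hd Hnd.
  exact: A2 T1 T2.
rewrite (edge_const Hs' Ht' (c1p_cons Hs HA) (c1p_cons Hs HB) (c1p_cons Ht HA) (c1p_cons Ht HB) HAB
           Ha Hna Hb Hnb Ha Hna Hd Hnda).
by rewrite /agree (arith s) // (arith t).
Qed.

Lemma adj (C : finType) (R : {set {set C}}) (s t : seq C) (A B D : {set C}) a b c d :
  c1p_ordering R s -> c1p_ordering R t -> A \in R -> B \in R -> D \in R ->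
  overlap A B -> overlap D B ->
  a \in A -> a \notin B -> b \in B -> b \notin A ->
  c \in D -> c \notin B -> d \in B -> d \notin D ->
  agree s t a b = agree s t c d.
Proof.
move=> Hs Ht HA HB HD HAB HDB Ha Hna Hb Hnb Hc Hnc Hd Hnd.
have Hs' := Hs.1; have Ht' := Ht.1.
case: (classic (exists p, [/\ p \in A, p \in B & p \notin D])) => [[p [Hpa Hpb Hpd]]|H1]; last first.
  apply: (adj_case2 Hs Ht HA HB HD HAB HDB _ Ha Hna Hb Hnb Hc Hnc Hd Hnd).
  move=> p Hpa Hpb; apply: NNPP => Hn; apply: H1; exists p; split => //; exact/negP.
case: (classic (exists q, [/\ q \in D, q \in B & q \notin A])) => [[q [Hqd Hqb Hqa]]|H2]; last first.
  symmetry; apply: (adj_case2 Hs Ht HD HB HA HDB HAB _ Hc Hnc Hd Hnd Ha Hna Hb Hnb).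
  move=> q Hqd Hqb; apply: NNPP => Hn; apply: H2; exists q; split => //; exact/negP.
have arith : forall (u : seq C), c1p_ordering R u ->
   (index a u < index q u) = ~~ (index c u < index p u).
  move=> u Hu.
  have T1 := triple Hu.1 (c1p_cons Hu HA) (c1p_cons Hu HB) Ha Hna Hpa Hpb Hqb Hqa.
  have T2 := triple Hu.1 (c1p_cons Hu HD) (c1p_cons Hu HB) Hc Hnc Hqd Hqb Hpb Hpd.
  exact: A3 T1 T2.
rewrite (edge_const Hs' Ht' (c1p_cons Hs HA) (c1p_cons Hs HB) (c1p_cons Ht HA) (c1p_cons Ht HB) HAB
           Ha Hna Hb Hnb Ha Hna Hqb Hqa).
rewrite (edge_const Hs' Ht' (c1p_cons Hs HD) (c1p_cons Hs HB) (c1p_cons Ht HD) (c1p_cons Ht HB) HDB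
           Hc Hnc Hd Hnd Hc Hnc Hpb Hpd).
rewrite /agree (arith s) // (arith t) //.
by case: (_ < _); case: (_ < _).
Qed.

Definition EV (C : finType) (s t : seq C) (f : bool) (A B : {set C}) : Prop :=
  forall a b, a \in A -> a \notin B -> b \in B -> b \notin A -> agree s t a b = f.

Lemma ev_step (C : finType) (R : {set {set C}}) (s t : seq C) f A B D :
  c1p_ordering R s -> c1p_ordering R t ->
  overlap_rel R A B -> overlap_rel R B D -> EV s t f A B -> EV s t f B D.
Proof.
move=> Hs Ht /and3P[HA HB HAB] /and3P[_ HD HBD] HE b d Hb Hnb Hd Hnd.
case: (ov_wit HAB) => [_ [a [Ha Hna]] [b' [Hb' Hnb']]].
have Hbd : b != d by apply/eqP => E; move: Hnb; rewrite E Hd.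
rewrite (agreeC Hs.1 Ht.1 Hbd).
rewrite -(HE a b' Ha Hna Hb' Hnb').
rewrite overlapC in HBD.
symmetry; apply: (adj Hs Ht HA HB HD HAB HBD Ha Hna Hb' Hnb' Hd Hnd Hb Hnb).
Qed.

Lemma ev_path (C : finType) (R : {set {set C}}) (s t : seq C) f p :
  c1p_ordering R s -> c1p_ordering R t ->
  forall A B, overlap_rel R A B -> EV s t f A B -> path (overlap_rel R) B p ->
  forall D, overlap_rel R (last B p) D -> EV s t f (last B p) D.
Proof.
move=> Hs Ht; elim: p => [|v p IH] A B HAB HE /=.
  by move=> _ D HBD; apply: (ev_step Hs Ht HAB HBD HE).
case/andP => HBv Hp D HD.
apply: (IH B v HBv _ Hp D HD).
exact: (ev_step Hs Ht HAB HBv HE).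
Qed.

Lemma ev_global (C : finType) (R : {set {set C}}) (s t : seq C) :
  c1p_ordering R s -> c1p_ordering R t -> overlap_connected R ->
  exists f, forall A B, overlap_rel R A B -> EV s t f A B.
Proof.
move=> Hs Ht Hcon.
case: (classic (exists A B, overlap_rel R A B)) => [[A [B HAB]]|Hn]; last first.
  exists true => A B HAB; exfalso; apply: Hn; by exists A, B.
have HAB' := HAB; case/and3P: HAB' => HA HB Hov.
case: (ov_wit Hov) => [_ [a [Ha Hna]] [b [Hb Hnb]]].
exists (agree s t a b).
have HE : EV s t (agree s t a b) A B.
  move=> a' b' Ha' Hna' Hb' Hnb'.
  apply: (edge_const Hs.1 Ht.1 (c1p_cons Hs HA) (c1p_cons Hs HB) (c1p_cons Ht HA) (c1p_cons Ht HB) Hov)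
    => //.
move=> D E HDE; have HDE' := HDE; case/and3P: HDE' => HD HE' _.
have /connectP [p Hp Hl] := Hcon B D HB HD.
rewrite Hl in Hp *.
by apply: (ev_path Hs Ht HAB HE Hp); rewrite -Hl.
Qed.

Lemma A4 p q r : btw p q r -> (q < r) = (p < r).
Proof. rewrite /btw => T1; apply/idP/idP; lia. Qed.
Lemma A5 p q r : ~ btw p q r -> q != p -> q != r -> (p < q) = (r < q).
Proof. rewrite /btw => T1 H1 H2; apply/idP/idP; lia. Qed.
Lemma A6 x u m z : ~ btw m u z -> ~ btw x u m -> u != m -> ~ btw x u z.
Proof. rewrite /btw => T1 T2 H; lia. Qed.
Lemma A7 (f : bool) a b c : (a < b) = f -> (b < c) = f -> a != b -> b != c -> btw a b c.
Proof. rewrite /btw; case: f => H1 H2 H3 H4; lia. Qed.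
Lemma A8 x y z u : btw x y z -> ~ btw u x y -> ~ btw u z y -> u != x -> u != z -> btw x u z.
Proof. rewrite /btw => T1 T2 T3 H1 H2; lia. Qed.

Lemma pres (C : finType) (R : {set {set C}}) (s t : seq C) f :
  c1p_ordering R s -> c1p_ordering R t ->
  (forall A B, overlap_rel R A B -> EV s t f A B) ->
  forall p D x y, D \in R -> path (overlap_rel R) D p -> y \in last D p -> x \in D -> y \notin D ->
  agree s t x y = f.
Proof.
move=> Hs Ht HG; elim=> [|R1 p IH] D x y HD /=.
  by move=> _ Hy _ Hny; move: Hny; rewrite Hy.
case/andP => HDR1 Hp Hy Hx Hny.
have HDR1' := HDR1; case/and3P: HDR1' => _ HR1 Hov.
case: (boolP (y \in R1)) => HyR1.
  case: (boolP (x \in R1)) => HxR1; last by apply: (HG D R1 HDR1).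
  case: (ov_wit Hov) => [_ [a [Ha Hna]] _].
  have <- := HG D R1 HDR1 a y Ha Hna HyR1 Hny.
  have T := fun u (Hu : c1p_ordering R u) =>
    triple Hu.1 (c1p_cons Hu HD) (c1p_cons Hu HR1) Ha Hna Hx HxR1 HyR1 Hny.
  by rewrite /agree (A4 (T s Hs)) (A4 (T t Ht)).
case: (ov_wit Hov) => [[m [HmD HmR1]] _ _].
have <- := IH R1 m y HR1 Hp Hy HmR1 HyR1.
have K : forall u, c1p_ordering R u -> (index x u < index y u) = (index m u < index y u).
  move=> u Hu; apply: A5.
  - by move=> B; move/negP: Hny; apply; apply: (cons_idx Hu.1 (c1p_cons Hu HD) Hx HmD B).
  - by apply: idx_neq Hu.1 _; apply/eqP => E; move: Hny; rewrite E Hx.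
  - by apply: idx_neq Hu.1 _; apply/eqP => E; move: Hny; rewrite E HmD.
by rewrite /agree (K s Hs) (K t Ht).
Qed.

Lemma agree_nsv (C : finType) (R : {set {set C}}) (s t : seq C) f x y :
  c1p_ordering R s -> c1p_ordering R t -> overlap_connected R ->
  (forall A B, overlap_rel R A B -> EV s t f A B) ->
  cb R x -> cb R y -> ~~ sv R x y -> agree s t x y = f.
Proof.
move=> Hs Ht Hcon HG Hx Hy Hnsv.
have Hxy : x != y by apply/eqP => E; move: Hnsv; rewrite E sv_refl.
case: (nsvP Hnsv) => X HX.
case: (boolP (x \in X)) => HxX /=; rewrite ?negbK => HyX.
  case/cbP: Hy => E HE HyE.
  have /connectP [p Hp Hl] := Hcon X E HX HE.
  by apply: (pres Hs Ht HG HX Hp) => //; rewrite -Hl.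
case/cbP: Hx => E HE HxE.
have /connectP [p Hp Hl] := Hcon X E HX HE.
rewrite (agreeC Hs.1 Ht.1 Hxy).
by apply: (pres Hs Ht HG HX Hp) => //; rewrite -Hl.
Qed.

Lemma unc_path (C : finType) (R : {set {set C}}) (t : seq C) :
  c1p_ordering R t ->
  forall p D x z u, D \in R -> path (overlap_rel R) D p -> x \in D -> z \in last D p -> ~~ cb R u ->
  ~ btw (index x t) (index u t) (index z t).
Proof.
move=> Ht; elim=> [|R1 p IH] D x z u HD /=.
  move=> _ Hx Hz Hu B; move/negP: Hu; apply; apply/cbP; exists D => //.
  exact: (cons_idx Ht.1 (c1p_cons Ht HD) Hx Hz B).
case/andP => HDR1 Hp Hx Hz Hu.
have HDR1' := HDR1; case/and3P: HDR1' => _ HR1 Hov.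
case: (ov_wit Hov) => [[m [HmD HmR1]] _ _].
apply: (A6 (IH R1 m z u HR1 Hp HmR1 Hz Hu)).
- move=> B; move/negP: Hu; apply; apply/cbP; exists D => //.
  exact: (cons_idx Ht.1 (c1p_cons Ht HD) Hx HmD B).
- apply: idx_neq Ht.1 _; apply/eqP => E; move/negP: Hu; apply; apply/cbP; exists D => //.
  by rewrite E.
Qed.

Lemma unc_not_btw (C : finType) (R : {set {set C}}) (t : seq C) x z u :
  c1p_ordering R t -> overlap_connected R -> cb R x -> cb R z -> ~~ cb R u ->
  ~ btw (index x t) (index u t) (index z t).
Proof.
move=> Ht Hcon /cbP [D HD Hx] /cbP [E HE Hz] Hu.
have /connectP [p Hp Hl] := Hcon D E HD HE.
by apply: (unc_path Ht HD Hp Hx) => //; rewrite -Hl.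
Qed.

Lemma c1p_sub (C : finType) (R : {set {set C}}) Z t : c1p_ordering (Z |: R) t -> c1p_ordering R t.
Proof. by case=> H1 H2; split => // X HX; apply: H2; rewrite setU1r. Qed.

Lemma decode (C : finType) (R : {set {set C}}) s x0 h i j :
  column_ordering s -> venn_triple R s x0 h i j ->
  let x := nth x0 s h in let y := nth x0 s i in let z := nth x0 s j in
  [/\ [/\ cb R x, cb R y & cb R z], [/\ ~~ sv R x y, ~~ sv R y z & ~~ sv R x z],
      index x s < index y s & index y s < index z s].
Proof.
move=> [Hu Hm] [Hhi Hij Hj [Cx Cy Cz] [N1 N2 N3]] x y z.
have Hi : i < size s by apply: ltn_trans Hj.
have Hh : h < size s by apply: ltn_trans Hi.
rewrite /x /y /z !index_uniq //.
split => //; first by split; apply/cbP.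
by split; apply/negP => /svP.
Qed.

Lemma dirA (C : finType) (RQ : {set {set C}}) (s : seq C) (Z : {set C}) :
  overlap_connected RQ -> c1p_ordering RQ s ->
  config101 RQ s Z \/ (config010 RQ s Z /\ exists2 c, c \in Z & unconstrained RQ c) ->
  ~ has_C1P (Z |: RQ).
Proof.
move=> Hcon Hs Hconf [t HtZ].
have Ht := c1p_sub HtZ.
have HZ : consecutive_in t Z by apply: HtZ.2; rewrite setU11.
case: (ev_global Hs Ht Hcon) => f HG.
have key : forall x0 h i j, venn_triple RQ s x0 h i j ->
   btw (index (nth x0 s h) t) (index (nth x0 s i) t) (index (nth x0 s j) t).
  move=> x0 h i j Hv.
  case: (decode Hs.1 Hv) => [[Cx Cy Cz] [N1 N2 N3] L1 L2].
  have E1 := agree_nsv Hs Ht Hcon HG Cx Cy N1.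
  have E2 := agree_nsv Hs Ht Hcon HG Cy Cz N2.
  move: E1 E2; rewrite /agree L1 L2 => E1 E2.
  have E1' : (index (nth x0 s h) t < index (nth x0 s i) t) = f by move: E1; case: (_ < _).
  have E2' : (index (nth x0 s i) t < index (nth x0 s j) t) = f by move: E2; case: (_ < _).
  apply: (A7 E1' E2'); apply: idx_neq Ht.1 _; apply/eqP => E.
  - by move: N1; rewrite E sv_refl.
  - by move: N2; rewrite E sv_refl.
case: Hconf => [[x0 [h [i [j [Hv [Hx Hy Hz]]]]]]|[[x0 [h [i [j [Hv [Hx Hy Hz]]]]]] [u Hu Hun]]].
  by move/negP: Hy; apply; apply: (cons_idx Ht.1 HZ Hx Hz (key _ _ _ _ Hv)).
case: (decode Hs.1 Hv) => [[Cx Cy Cz] _ _ _].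
move/uncP: Hun => Hun.
apply: (unc_not_btw Ht Hcon Cx Cz Hun).
apply: (A8 (key _ _ _ _ Hv)).
- by move=> B; move/negP: Hx; apply; apply: (cons_idx Ht.1 HZ Hu Hy B).
- by move=> B; move/negP: Hz; apply; apply: (cons_idx Ht.1 HZ Hu Hy B).
- by apply: idx_neq Ht.1 _; apply/eqP => E; move: Hx; rewrite -E Hu.
- by apply: idx_neq Ht.1 _; apply/eqP => E; move: Hz; rewrite -E Hu.
Qed.

Definition ordk (C : finType) (s : seq C) (key : C -> nat) : rel C :=
  fun x y => (key x < key y) || ((key x == key y) && (index x s <= index y s)).

Lemma ordk_trans (C : finType) (s : seq C) key : transitive (ordk s key).
Proof. rewrite /ordk => y x z H1 H2; lia. Qed.
Lemma ordk_total (C : finType) (s : seq C) key : total (ordk s key).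
Proof. rewrite /ordk => x y; lia. Qed.

Lemma ordk_key (C : finType) (s : seq C) key x y : ordk s key x y -> key x <= key y.
Proof. rewrite /ordk; lia. Qed.

Lemma build (C : finType) (RQ : {set {set C}}) (s : seq C) (Z : {set C}) (key : C -> nat) lo hi :
  c1p_ordering RQ s ->
  (forall x y, cb RQ x -> cb RQ y -> ~~ sv RQ x y -> ordk s key x y -> x != y -> index x s < index y s) ->
  (forall x c y, cb RQ x -> cb RQ y -> ~~ cb RQ c -> ordk s key x c -> ordk s key c y ->
      x != c -> c != y -> False) ->
  (forall c, (c \in Z) = (lo <= key c <= hi)) ->
  has_C1P (Z |: RQ).
Proof.
move=> Hs P1 P2 PZ.
have [Hu Hm] := Hs.1.
set t := sort (ordk s key) s.
have Htu : uniq t by rewrite sort_uniq.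
have Hsort : sorted (ordk s key) t by apply: sort_sorted; apply: ordk_total.
exists t; split.
  by split => // c; rewrite mem_sort.
move=> X HX x0 h i j Hhi Hij Hj Hh Hjx.
have Hi : i < size t by apply: ltn_trans Hj.
have Hh' : h < size t by apply: ltn_trans Hi.
have O1 : ordk s key (nth x0 t h) (nth x0 t i) by apply: (sorted_ltn_nth (@ordk_trans _ s key)).
have O2 : ordk s key (nth x0 t i) (nth x0 t j) by apply: (sorted_ltn_nth (@ordk_trans _ s key)).
have D1 : nth x0 t h != nth x0 t i by rewrite nth_uniq // neq_ltn Hhi.
have D2 : nth x0 t i != nth x0 t j by rewrite nth_uniq // neq_ltn Hij.
move: Hh Hjx; case/setU1P: HX => [->|HX] Hh Hjx.
  move: Hh Hjx; rewrite !PZ => H1 H2.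
  have K1 := ordk_key O1; have K2 := ordk_key O2; lia.
have Cx : cb RQ (nth x0 t h) by apply/cbP; exists X.
have Cy : cb RQ (nth x0 t j) by apply/cbP; exists X.
case: (boolP (cb RQ (nth x0 t i))) => Cc; last by exfalso; apply: (P2 _ _ _ Cx Cy Cc O1 O2 D1 D2).
case: (boolP (sv RQ (nth x0 t i) (nth x0 t h))) => S1.
  by rewrite (sv_mem S1 HX).
case: (boolP (sv RQ (nth x0 t i) (nth x0 t j))) => S2.
  by rewrite (sv_mem S2 HX).
rewrite sv_sym in S1.
have L1 := P1 _ _ Cx Cc S1 O1 D1.
have L2 := P1 _ _ Cc Cy S2 O2 D2.
apply: (cons_idx Hs.1 (c1p_cons Hs HX) Hh Hjx); rewrite /btw; left; split => //.
Qed.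

Lemma W_path (C : finType) (R : {set {set C}}) (s : seq C) x y :
  c1p_ordering R s -> sv R x y ->
  forall p D d, D \in R -> path (overlap_rel R) D p -> x \notin D -> d \in D ->
  btw (index x s) (index d s) (index y s) -> x \in last D p -> False.
Proof.
move=> Hs Hxy; elim=> [|R1 p IH] D d HD /=.
  by move=> _ Hx _ _ Hx'; move: Hx; rewrite Hx'.
case/andP => HDR1 Hp Hx Hd Hb Hl.
have HDR1' := HDR1; case/and3P: HDR1' => _ HR1 Hov.
have Hy : y \notin D by rewrite -(sv_mem Hxy HD).
have inb : forall e, e \in D -> btw (index x s) (index e s) (index y s).
  move=> e He; apply: (A8 Hb).
  - by move=> B; move/negP: Hx; apply; apply: (cons_idx Hs.1 (c1p_cons Hs HD) He Hd B).
  - by move=> B; move/negP: Hy; apply; apply: (cons_idx Hs.1 (c1p_cons Hs HD) He Hd B).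
  - by apply: idx_neq Hs.1 _; apply/eqP => E; move: Hx; rewrite -E He.
  - by apply: idx_neq Hs.1 _; apply/eqP => E; move: Hy; rewrite -E He.
case: (ov_wit Hov) => [[m [HmD HmR1]] [a [Ha Hna]] _].
have HxR1 : x \notin R1.
  apply/negP => HxR1; have HyR1 : y \in R1 by rewrite -(sv_mem Hxy HR1).
  move/negP: Hna; apply; exact: (cons_idx Hs.1 (c1p_cons Hs HR1) HxR1 HyR1 (inb a Ha)).
exact: (IH R1 m HR1 Hp HxR1 HmR1 (inb m HmD) Hl).
Qed.

Lemma contig (C : finType) (R : {set {set C}}) (s : seq C) x y w :
  c1p_ordering R s -> overlap_connected R -> sv R x y -> cb R x ->
  btw (index x s) (index w s) (index y s) -> sv R x w.
Proof.
move=> Hs Hcon Hxy Cx Hb; apply: NNPP => /negP Hn.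
case: (nsvP Hn) => X HX.
case: (boolP (x \in X)) => HxX /=; rewrite ?negbK => HwX.
  have HyX : y \in X by rewrite -(sv_mem Hxy HX).
  by move/negP: HwX; apply; apply: (cons_idx Hs.1 (c1p_cons Hs HX) HxX HyX Hb).
case/cbP: Cx => E HE HxE.
have /connectP [p Hp Hl] := Hcon X E HX HE.
by apply: (W_path Hs Hxy HX Hp HxX HwX Hb); rewrite -Hl.
Qed.

Lemma sideL (C : finType) (R : {set {set C}}) (s : seq C) x p w :
  c1p_ordering R s -> overlap_connected R -> sv R p x -> cb R x -> ~~ sv R w x ->
  index w s < index x s -> index w s < index p s.
Proof.
move=> Hs Hcon Hpx Cx Hw Hlt.
have Hwp : index w s != index p s.
  by apply: idx_neq Hs.1 _; apply/eqP => E; move: Hw; rewrite E Hpx.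
case: (ltnP (index w s) (index p s)) => // Hle.
have Hb : btw (index x s) (index w s) (index p s) by rewrite /btw; lia.
have Hxp : sv R x p by rewrite sv_sym.
have := contig Hs Hcon Hxp Cx Hb.
by rewrite sv_sym (negbTE Hw).
Qed.

Lemma sideR (C : finType) (R : {set {set C}}) (s : seq C) x p w :
  c1p_ordering R s -> overlap_connected R -> sv R p x -> cb R x -> ~~ sv R w x ->
  index x s < index w s -> index p s < index w s.
Proof.
move=> Hs Hcon Hpx Cx Hw Hlt.
have Hwp : index w s != index p s.
  by apply: idx_neq Hs.1 _; apply/eqP => E; move: Hw; rewrite E Hpx.
case: (ltnP (index p s) (index w s)) => // Hle.
have Hb : btw (index x s) (index w s) (index p s) by rewrite /btw; lia.
have Hxp : sv R x p by rewrite sv_sym.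
have := contig Hs Hcon Hxp Cx Hb.
by rewrite sv_sym (negbTE Hw).
Qed.

Lemma svx (C : finType) (R : {set {set C}}) u v c : sv R u c -> sv R v c -> sv R u v.
Proof. by move=> H1 H2; apply: (sv_trans H1); rewrite sv_sym. Qed.

Lemma third0 (C : finType) (R : {set {set C}}) a b X :
  overlap_connected R -> cb R b -> X \in R -> a \in X -> b \notin X ->
  exists w, [/\ cb R w, ~~ sv R w a & ~~ sv R w b].
Proof.
move=> Hcon /cbP [E HE HbE] HX HaX HbX.
have /connectP [[|Y p] Hp Hl] := Hcon X E HX HE.
  by move: HbX; rewrite /= in Hl; rewrite -Hl HbE.
case/andP: Hp => HXY _; case/and3P: HXY => _ HY Hov.
case: (ov_wit Hov) => [[m [HmX HmY]] [p1 [Hp1 Hnp1]] [q [Hq Hnq]]].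
have Npm : ~~ sv R p1 m by apply/negP => S; move: Hnp1; rewrite (sv_mem S HY) HmY.
have Nmq : ~~ sv R m q by apply/negP => S; move: Hnq; rewrite -(sv_mem S HX) HmX.
have Npq : ~~ sv R p1 q by apply/negP => S; move: Hnq; rewrite -(sv_mem S HX) Hp1.
have Cp : cb R p1 by apply/cbP; exists X.
have Cm : cb R m by apply/cbP; exists X.
have Cq : cb R q by apply/cbP; exists Y.
case E1: (~~ sv R p1 a && ~~ sv R p1 b); first by case/andP: E1 => *; exists p1.
case E2: (~~ sv R m a && ~~ sv R m b); first by case/andP: E2 => *; exists m.
case E3: (~~ sv R q a && ~~ sv R q b); first by case/andP: E3 => *; exists q.
move: E1 E2 E3; rewrite -!negb_or => /negbFE H1 /negbFE H2 /negbFE H3.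
exfalso.
case/orP: H1 => H1; case/orP: H2 => H2; case/orP: H3 => H3;
 first [ by rewrite (svx H1 H2) in Npm | by rewrite (svx H1 H3) in Npq | by rewrite (svx H2 H3) in Nmq ].
Qed.

Lemma third (C : finType) (R : {set {set C}}) a b :
  overlap_connected R -> cb R a -> cb R b -> ~~ sv R a b ->
  exists w, [/\ cb R w, ~~ sv R w a & ~~ sv R w b].
Proof.
move=> Hcon Ca Cb N; case: (nsvP N) => X HX.
case: (boolP (a \in X)) => HaX /=; rewrite ?negbK => HbX.
  exact: (third0 Hcon Cb HX HaX HbX).
case: (third0 Hcon Ca HX HbX HaX) => w [? ? ?]; by exists w.
Qed.

Lemma mk_triple (C : finType) (R : {set {set C}}) (s : seq C) x y z :
  column_ordering s -> cb R x -> cb R y -> cb R z ->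
  ~~ sv R x y -> ~~ sv R y z -> ~~ sv R x z ->
  index x s < index y s -> index y s < index z s ->
  venn_triple R s x (index x s) (index y s) (index z s) /\
  [/\ nth x s (index x s) = x, nth x s (index y s) = y & nth x s (index z s) = z].
Proof.
move=> [Hu Hm] Cx Cy Cz N1 N2 N3 L1 L2.
rewrite !nth_index //; split => //; rewrite /venn_triple !nth_index //.
split => //; first by rewrite index_mem.
  by split; apply/cbP.
by split; move/svP; apply/negP.
Qed.

Lemma mk101 (C : finType) (R : {set {set C}}) (s : seq C) (Z : {set C}) x y z :
  column_ordering s -> cb R x -> cb R y -> cb R z ->
  ~~ sv R x y -> ~~ sv R y z -> ~~ sv R x z ->
  index x s < index y s -> index y s < index z s ->
  x \in Z -> y \notin Z -> z \in Z -> config101 R s Z.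
Proof.
move=> Hs Cx Cy Cz N1 N2 N3 L1 L2 Hx Hy Hz.
case: (mk_triple Hs Cx Cy Cz N1 N2 N3 L1 L2) => Hv [E1 E2 E3].
by exists x, (index x s), (index y s), (index z s); rewrite E1 E2 E3.
Qed.

Lemma mk010 (C : finType) (R : {set {set C}}) (s : seq C) (Z : {set C}) x y z :
  column_ordering s -> cb R x -> cb R y -> cb R z ->
  ~~ sv R x y -> ~~ sv R y z -> ~~ sv R x z ->
  index x s < index y s -> index y s < index z s ->
  x \notin Z -> y \in Z -> z \notin Z -> config010 R s Z.
Proof.
move=> Hs Cx Cy Cz N1 N2 N3 L1 L2 Hx Hy Hz.
case: (mk_triple Hs Cx Cy Cz N1 N2 N3 L1 L2) => Hv [E1 E2 E3].
by exists x, (index x s), (index y s), (index z s); rewrite E1 E2 E3.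
Qed.

Lemma caseK0 (C : finType) (RQ : {set {set C}}) (s : seq C) (Z : {set C}) :
  c1p_ordering RQ s -> overlap_connected RQ ->
  (forall c, c \in Z -> ~~ cb RQ c) -> has_C1P (Z |: RQ).
Proof.
move=> Hs Hcon HK.
have kz : forall x, cb RQ x -> nat_of_bool (x \in Z) = 0.
  by move=> x Cx; case: (boolP (x \in Z)) => // /HK; rewrite Cx.
apply: (build (key := fun c => nat_of_bool (c \in Z)) (lo := 1) (hi := 1) Hs).
- move=> x y Cx Cy _; rewrite /ordk (kz x Cx) (kz y Cy) /= => H Hxy.
  have := idx_neq Hs.1 Hxy; lia.
- move=> x c y Cx Cy Cc; rewrite /ordk (kz x Cx) (kz y Cy) => O1 O2 D1 D2.
  have N1 := idx_neq Hs.1 D1; have N2 := idx_neq Hs.1 D2.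
  apply: (unc_not_btw Hs Hcon Cx Cy Cc); rewrite /btw; left.
  move: O1 O2 N1 N2; case: (c \in Z) => /=; lia.
- by move=> c; case: (c \in Z).
Qed.

Definition rightside (C : finType) (R : {set {set C}}) (s : seq C) (Z : {set C}) (a b c : C) : bool :=
  [&& cb R c, ~~ sv R c a & (if sv R c b then c \notin Z else index b s < index c s)].

Definition mlf (C : finType) (R : {set {set C}}) (s : seq C) (Z : {set C}) (a b : C) : bool :=
  [exists c, (c \in Z) && ~~ cb R c] && [exists c, rightside R s Z a b c].

Definition keyf (C : finType) (R : {set {set C}}) (s : seq C) (Z : {set C}) (a b : C) (ml : bool) (c : C) : nat :=
  if ~~ cb R c then (if c \in Z then (if ml then 3 else 7) else (if index c s < index a s then 0 else 10))
  else if sv R c a then (if c \in Z then 4 else (if ml then 8 else 2))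
  else if sv R c b then (if c \in Z then 6 else 8)
  else if index c s < index a s then 1 else if index c s < index b s then 5 else 9.

Lemma nsv_neq (C : finType) (R : {set {set C}}) (s : seq C) c d :
  column_ordering s -> ~~ sv R c d -> index c s != index d s.
Proof. by move=> Hs N; apply: idx_neq Hs _; apply/eqP => E; move: N; rewrite E sv_refl. Qed.

Definition HypK (C : finType) (RQ : {set {set C}}) (s : seq C) (Z : {set C}) (a b : C) : Prop :=
 [/\ c1p_ordering RQ s, overlap_connected RQ, ~ config101 RQ s Z,
     ~ (config010 RQ s Z /\ (exists2 c, c \in Z & unconstrained RQ c))
     & ([/\ a \in Z, cb RQ a, b \in Z & cb RQ b] /\
     (forall c, c \in Z -> cb RQ c -> index a s <= index c s /\ index c s <= index b s))].

Lemma hk_F0 (C : finType) RQ s (Z : {set C}) a b : HypK RQ s Z a b -> index a s <= index b s.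
Proof. by case=> _ _ _ _ [[Za Ca Zb Cb] Hm]; case: (Hm b Zb Cb). Qed.

Lemma hk_Fab (C : finType) RQ s (Z : {set C}) a b : HypK RQ s Z a b -> ~~ sv RQ a b ->
  index a s < index b s.
Proof.
move=> H N; have := hk_F0 H; case: H => Hs _ _ _ _.
have := nsv_neq Hs.1 N; lia.
Qed.

Lemma hk_Fq (C : finType) RQ s (Z : {set C}) a b q : HypK RQ s Z a b ->
  sv RQ q b -> ~~ sv RQ q a -> index a s < index q s.
Proof.
move=> H Qq Pq.
have Nab : ~~ sv RQ a b by apply/negP => S; move: Pq; rewrite (svx Qq S).
have L := hk_Fab H Nab.
case: H => Hs Hcon _ _ [[Za Ca Zb Cb] _].
by apply: (sideL Hs Hcon Qq Cb Nab L).
Qed.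

Lemma hk_Fp (C : finType) RQ s (Z : {set C}) a b p : HypK RQ s Z a b ->
  sv RQ p a -> ~~ sv RQ p b -> index p s < index b s.
Proof.
move=> H Pp Qp.
have Nba : ~~ sv RQ b a by apply/negP => S; move: Qp; rewrite (svx Pp S).
have Nab : ~~ sv RQ a b by rewrite sv_sym.
have L := hk_Fab H Nab.
case: H => Hs Hcon _ _ [[Za Ca Zb Cb] _].
by apply: (sideR Hs Hcon Pp Ca Nba L).
Qed.

Lemma hk_In5 (C : finType) RQ s (Z : {set C}) a b c : HypK RQ s Z a b ->
  cb RQ c -> ~~ sv RQ c a -> ~~ sv RQ c b -> index a s < index c s -> index c s < index b s -> c \in Z.
Proof.
move=> H Cc Pc Qc L1 L2; case: H => Hs Hcon N101 _ [[Za Ca Zb Cb] _].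
apply: NNPP => /negP Zc; apply: N101.
have Nab : ~~ sv RQ a b.
  apply/negP => S.
  have := contig Hs Hcon S Ca (or_introl (conj L1 L2) : btw _ _ _).
  by rewrite sv_sym (negbTE Pc).
apply: (mk101 Hs.1 Ca Cc Cb _ Qc Nab L1 L2 Za Zc Zb).
by rewrite sv_sym.
Qed.

Lemma hk_OtherZ (C : finType) RQ s (Z : {set C}) a b c : HypK RQ s Z a b ->
  c \in Z -> cb RQ c -> ~~ sv RQ c a -> ~~ sv RQ c b ->
  index a s < index c s /\ index c s < index b s.
Proof.
move=> H Zc Cc Pc Qc; case: H => Hs Hcon _ _ [[Za Ca Zb Cb] Hm].
case: (Hm c Zc Cc) => L1 L2.
have N1 := nsv_neq Hs.1 Pc; have N2 := nsv_neq Hs.1 Qc.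
by split; [rewrite ltn_neqAle eq_sym N1 L1 | rewrite ltn_neqAle N2 L2].
Qed.

Lemma hk_K1empty (C : finType) RQ s (Z : {set C}) a b x : HypK RQ s Z a b ->
  mlf RQ s Z a b -> cb RQ x -> ~~ sv RQ x a -> ~~ sv RQ x b -> index x s < index a s -> False.
Proof.
move=> H Ml Cx Px Qx Lx.
have Fq := fun q => hk_Fq (q := q) H.
have F0 := hk_F0 H.
case: H => Hs Hcon _ N010 [[Za Ca Zb Cb] Hm].
case/andP: Ml => /existsP [u /andP [Zu Cu]] /existsP [z /and3P [Cz Pz Rz]].
have Zx : x \notin Z by apply/negP => Zx; have := (Hm x Zx Cx).1; rewrite leqNgt Lx.
apply: N010; split; last by exists u => //; apply/uncP.
have Nax : ~~ sv RQ a x by rewrite sv_sym.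
have Naz : ~~ sv RQ a z by rewrite sv_sym.
move: Rz; case: (boolP (sv RQ z b)) => Qz Rz.
  have Nxz : ~~ sv RQ x z by apply/negP => S; move: Qx; rewrite (sv_trans S Qz).
  exact: (mk010 Hs.1 Cx Ca Cz Px Naz Nxz Lx (Fq z Qz Pz) Zx Za Rz).
have Lz : index a s < index z s by apply: leq_ltn_trans F0 Rz.
have Zz : z \notin Z by apply/negP => Zz; have := (Hm z Zz Cz).2; rewrite leqNgt Rz.
have Nxz : ~~ sv RQ x z.
  apply/negP => S.
  have := contig Hs Hcon S Cx (or_introl (conj Lx Lz) : btw _ _ _).
  by rewrite (negbTE Px).
exact: (mk010 Hs.1 Cx Ca Cz Px Naz Nxz Lx Lz Zx Za Zz).
Qed.

Lemma sv_symI (C : finType) (R : {set {set C}}) c d : sv R c d -> sv R d c.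
Proof. by rewrite sv_sym. Qed.

Lemma hk_PQ (C : finType) RQ s (Z : {set C}) a b x : HypK RQ s Z a b ->
  mlf RQ s Z a b -> cb RQ x -> sv RQ x a -> x \notin Z -> sv RQ a b.
Proof.
move=> H Ml Cx Px Zx; apply: NNPP => /negP Nab.
have Qx : ~~ sv RQ x b by apply/negP => S; move: Nab; rewrite (sv_trans (sv_symI Px) S).
have Lx := hk_Fp H Px Qx.
have K1 := fun w => hk_K1empty (x := w) H Ml.
have In5 := fun c => hk_In5 (c := c) H.
have F0 := hk_F0 H.
case: H => Hs Hcon _ N010 [[Za Ca Zb Cb] Hm].
have Ml' := Ml.
case/andP: Ml' => /existsP [u /andP [Zu Cu]] /existsP [z /and3P [Cz Pz Rz]].
apply: N010; split; last by exists u => //; apply/uncP.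
have Nxb : ~~ sv RQ x b by [].
have nxw : forall w, ~~ sv RQ w a -> ~~ sv RQ x w.
  by move=> w Pw; apply/negP => S; move: Pw; rewrite (sv_trans (sv_symI S) Px).
move: Rz; case: (boolP (sv RQ z b)) => Qz Rz.
  case: (third Hcon Ca Cb Nab) => w [Cw Pw Qw].
  case: (ltnP (index w s) (index a s)) => L1.
    by exfalso; apply: (K1 w Cw Pw Qw L1).
  have L1' : index a s < index w s by rewrite ltn_neqAle eq_sym (nsv_neq Hs.1 Pw) L1.
  have Nxz : ~~ sv RQ x z.
    apply/negP => S; move: Nab.
    by rewrite (sv_trans (sv_symI Px) (sv_trans S Qz)).
  have Nwz : ~~ sv RQ w z by apply/negP => S; move: Qw; rewrite (sv_trans S Qz).
  case: (ltnP (index w s) (index b s)) => L2.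
    have Zw := In5 w Cw Pw Qw L1' L2.
    have M1 := sideR Hs Hcon Px Ca Pw L1'.
    have M2 := sideL Hs Hcon Qz Cb Qw L2.
    exact: (mk010 Hs.1 Cx Cw Cz (nxw w Pw) Nwz Nxz M1 M2 Zx Zw Rz).
  have L2' : index b s < index w s by rewrite ltn_neqAle eq_sym (nsv_neq Hs.1 Qw) L2.
  have Zw : w \notin Z by apply/negP => Zw; have := (Hm w Zw Cw).2; rewrite leqNgt L2'.
  have Nbw : ~~ sv RQ b w by rewrite sv_sym.
  exact: (mk010 Hs.1 Cx Cb Cw Nxb Nbw (nxw w Pw) Lx L2' Zx Zb Zw).
have Zz : z \notin Z by apply/negP => Zz; have := (Hm z Zz Cz).2; rewrite leqNgt Rz.
have Nbz : ~~ sv RQ b z by rewrite sv_sym.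
exact: (mk010 Hs.1 Cx Cb Cz Nxb Nbz (nxw z Pz) Lx Rz Zx Zb Zz).
Qed.

Lemma hk_mono (C : finType) RQ s (Z : {set C}) a b x y : HypK RQ s Z a b ->
  cb RQ x -> cb RQ y -> ~~ sv RQ x y -> index x s < index y s ->
  keyf RQ s Z a b (mlf RQ s Z a b) x <= keyf RQ s Z a b (mlf RQ s Z a b) y.
Proof.
move=> H Cx Cy N L.
have PQ := fun w => hk_PQ (x := w) H.
have Fq := fun q => hk_Fq (q := q) H.
have F0 := hk_F0 H.
case: H => Hs Hcon _ _ [[Za Ca Zb Cb] Hm].
rewrite /keyf Cx Cy /=.
case Px: (sv RQ x a); case Py: (sv RQ y a).
- by move: N; rewrite (svx Px Py).
- have Ny : ~~ (index y s < index a s).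
    apply/negP => Ly; have := sideL Hs Hcon Px Ca (negbT Py) Ly.
    by rewrite ltnNge (ltnW L).
  have Ly : index a s < index y s.
    by rewrite ltn_neqAle eq_sym (nsv_neq Hs.1 (negbT Py)) leqNgt Ny.
  rewrite (negbTE Ny).
  case Zx: (x \in Z); first by repeat case: ifP.
  case Ml: (mlf RQ s Z a b); last by repeat case: ifP.
  have Sab := PQ x Ml Cx Px (negbT Zx).
  have Qy : sv RQ y b = false.
    by apply/negP => S; move: Py; rewrite (sv_trans S (sv_symI Sab)).
  rewrite Qy.
  case: ifP => // Ly2.
  have := contig Hs Hcon Sab Ca (or_introl (conj Ly Ly2) : btw _ _ _).
  by rewrite sv_sym Py.
- have Lx : index x s < index a s.
    case: (ltnP (index x s) (index a s)) => // Lx; exfalso.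
    have Lx' : index a s < index x s by rewrite ltn_neqAle eq_sym (nsv_neq Hs.1 (negbT Px)) Lx.
    have := sideR Hs Hcon Py Ca (negbT Px) Lx'.
    by rewrite ltnNge (ltnW L).
  have Qx : sv RQ x b = false.
    apply/negP => Qx; have := Fq x Qx (negbT Px); by rewrite ltnNge (ltnW Lx).
  rewrite Qx Lx.
  by repeat case: ifP.
case Qx: (sv RQ x b); case Qy: (sv RQ y b).
- by move: N; rewrite (svx Qx Qy).
- have Lx := Fq x Qx (negbT Px).
  have Ny1 : (index y s < index a s) = false.
    by apply/negP => Ly; have := ltn_trans Lx (ltn_trans L Ly); rewrite ltnn.
  have Ny2 : (index y s < index b s) = false.
    apply/negP => Ly; have := sideL Hs Hcon Qx Cb (negbT Qy) Ly.
    by rewrite ltnNge (ltnW L).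
  rewrite Ny1 Ny2.
  by repeat case: ifP.
- have Nx2 : index x s < index b s.
    case: (ltnP (index x s) (index b s)) => // Lx; exfalso.
    have Lx' : index b s < index x s by rewrite ltn_neqAle eq_sym (nsv_neq Hs.1 (negbT Qx)) Lx.
    have := sideR Hs Hcon Qy Cb (negbT Qx) Lx'.
    by rewrite ltnNge (ltnW L).
  rewrite Nx2.
  by repeat case: ifP.
- move: L; generalize (index x s) (index y s) (index a s) (index b s) => p q r t.
  clear => L; by repeat case: ifP => ?; lia.
Qed.

Lemma hk_kr (C : finType) RQ s (Z : {set C}) a b ml x :
  cb RQ x -> 1 <= keyf RQ s Z a b ml x <= 9.
Proof. by move=> Cx; rewrite /keyf Cx /=; repeat case: ifP. Qed.

Lemma hk_kml (C : finType) RQ s (Z : {set C}) a b x : HypK RQ s Z a b ->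
  mlf RQ s Z a b -> cb RQ x -> 4 <= keyf RQ s Z a b (mlf RQ s Z a b) x.
Proof.
move=> H Ml Cx.
have K1 := hk_K1empty (x := x) H Ml Cx.
rewrite /keyf Cx Ml /=.
case Px: (sv RQ x a); first by case: ifP.
case Qx: (sv RQ x b); first by case: ifP.
case: ifP => L1; first by exfalso; apply: K1 => //; rewrite ?Px ?Qx.
by case: ifP.
Qed.

Lemma hk_knml (C : finType) RQ s (Z : {set C}) a b c y : HypK RQ s Z a b ->
  ~~ mlf RQ s Z a b -> c \in Z -> ~~ cb RQ c -> cb RQ y ->
  keyf RQ s Z a b (mlf RQ s Z a b) y <= 6.
Proof.
move=> H Ml Zc Cc Cy.
have Ry : rightside RQ s Z a b y = false.
  apply/negP => Ry; move/negP: Ml; apply; apply/andP; split; apply/existsP.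
    by exists c; rewrite Zc Cc.
  by exists y.
case: H => Hs Hcon _ _ [[Za Ca Zb Cb] Hm].
rewrite /keyf Cy (negbTE Ml) /=.
move: Ry; rewrite /rightside Cy /=.
case Py: (sv RQ y a) => /=; first by repeat case: ifP.
case Qy: (sv RQ y b) => /=.
  by case: (y \in Z).
case: ifP => // _; case: ifP => // L2 Ry; exfalso.
have := nsv_neq Hs.1 (negbT Qy); move: L2 Ry.
generalize (index y s) (index b s) => p q; clear; lia.
Qed.

Lemma hk_PZ (C : finType) RQ s (Z : {set C}) a b c : HypK RQ s Z a b ->
  (c \in Z) = ((if mlf RQ s Z a b then 3 else 4) <= keyf RQ s Z a b (mlf RQ s Z a b) c
               <= (if mlf RQ s Z a b then 6 else 7)).
Proof.
move=> H.
have OZ := hk_OtherZ (c := c) H.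
have In5 := hk_In5 (c := c) H.
case: H => Hs Hcon _ _ [[Za Ca Zb Cb] Hm].
rewrite /keyf.
case Cc: (cb RQ c) => /=; last by case: (c \in Z); repeat case: ifP.
case Pc: (sv RQ c a); first by case: (c \in Z); repeat case: ifP.
case Qc: (sv RQ c b); first by case: (c \in Z); repeat case: ifP.
case Zc: (c \in Z).
  case: (OZ Zc Cc (negbT Pc) (negbT Qc)) => L1 L2.
  rewrite ltnNge (ltnW L1) L2 /=.
  by case: (mlf RQ s Z a b).
case L1: (index c s < index a s); first by case: (mlf RQ s Z a b).
case L2: (index c s < index b s); last by case: (mlf RQ s Z a b).
exfalso; move/negbT: Zc; move/negP; apply; apply: In5 => //; rewrite ?Pc ?Qc //.
by rewrite ltn_neqAle eq_sym (nsv_neq Hs.1 (negbT Pc)) leqNgt L1.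
Qed.

Lemma hk_build (C : finType) RQ s (Z : {set C}) a b : HypK RQ s Z a b -> has_C1P (Z |: RQ).
Proof.
move=> H.
have mono := fun x y => @hk_mono _ _ _ _ _ _ x y H.
have kml := fun x => @hk_kml _ _ _ _ _ _ x H.
have knml := fun c y => @hk_knml _ _ _ _ _ _ c y H.
have PZ := fun c => @hk_PZ _ _ _ _ _ _ c H.
case: H => Hs Hcon _ _ _.
apply: (build Hs _ _ PZ).
- move=> x y Cx Cy N O D.
  case: (ltnP (index x s) (index y s)) => // Le; exfalso.
  have Lt : index y s < index x s by rewrite ltn_neqAle eq_sym (idx_neq Hs.1 D) Le.
  have N' : ~~ sv RQ y x by rewrite sv_sym.
  have M := mono y x Cy Cx N' Lt.
  move: O M Lt; rewrite /ordk.
  generalize (keyf RQ s Z a b (mlf RQ s Z a b) x) (keyf RQ s Z a b (mlf RQ s Z a b) y)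
    (index x s) (index y s) => p q r t; clear; lia.
- move=> x c y Cx Cy Cc O1 O2 _ _.
  have K1 := ordk_key O1; have K2 := ordk_key O2.
  have Rx := hk_kr s Z a b (mlf RQ s Z a b) Cx.
  have Ry := hk_kr s Z a b (mlf RQ s Z a b) Cy.
  case: (boolP (mlf RQ s Z a b)) => Ml.
    have := kml x Ml Cx.
    move: K1 K2 Rx Ry; set kx := keyf _ _ _ _ _ _ x; set ky := keyf _ _ _ _ _ _ y.
    rewrite /keyf Cc Ml /=.
    case: (c \in Z); last case: ifP => _; clear => *; lia.
  case: (boolP (c \in Z)) => Zc.
    have := knml c y Ml Zc Cc Cy.
    move: K1 K2 Rx Ry; set kx := keyf _ _ _ _ _ _ x; set ky := keyf _ _ _ _ _ _ y.
    rewrite /keyf Cc (negbTE Ml) Zc /=.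
    clear => *; lia.
  move: K1 K2 Rx Ry; set kx := keyf _ _ _ _ _ _ x; set ky := keyf _ _ _ _ _ _ y.
  rewrite /keyf Cc (negbTE Zc) /=.
  case: ifP => _; clear => *; lia.
Qed.

Lemma dirB (C : finType) (RQ : {set {set C}}) (s : seq C) (Z : {set C}) :
  c1p_ordering RQ s -> overlap_connected RQ -> ~ config101 RQ s Z ->
  ~ (config010 RQ s Z /\ (exists2 c, c \in Z & unconstrained RQ c)) ->
  has_C1P (Z |: RQ).
Proof.
move=> Hs Hcon N1 N2.
case: (boolP [exists c, (c \in Z) && cb RQ c]) => [/existsP [c0 Hc0]|Hn]; last first.
  apply: (caseK0 Hs Hcon) => c Zc; apply/negP => Cc; move/negP: Hn; apply.
  by apply/existsP; exists c; rewrite Zc Cc.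
case: (@arg_minnP _ c0 (fun c => (c \in Z) && cb RQ c) (fun c => index c s) Hc0) => a /andP [Za Ca] Hmin.
case: (@arg_maxnP _ c0 (fun c => (c \in Z) && cb RQ c) (fun c => index c s) Hc0) => b /andP [Zb Cb] Hmax.
apply: (@hk_build _ _ s _ a b); rewrite /HypK; split => //; split; first by split.
by move=> c Zc Cc; split; [apply: Hmin | apply: Hmax]; rewrite Zc Cc.
Qed.

Theorem mainTheorem8 (C : finType) (RQ : {set {set C}}) (s : seq C) (Z : {set C}) :
  RQ != set0 ->
  has_C1P RQ ->
  overlap_connected RQ ->
  c1p_ordering RQ s ->
  Z \notin RQ ->
  (~ has_C1P (Z |: RQ) <->
   config101 RQ s Z \/
   (config010 RQ s Z /\ exists2 c, c \in Z & unconstrained RQ c)).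
Proof.
move=> _ _ Hcon Hs _; split; last exact: dirA.
move=> H; apply: NNPP => Hn; apply: H; apply: (dirB Hs Hcon).
- by move=> H1; apply: Hn; left.
- by move=> H2; apply: Hn; right.
Qed.
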